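(* Let $(V,\|\cdot\|)$ be a Banach space. Then $V$ admits exactly one reversible conical bicombing, namely the one given by linear segments, $\sigma(x,y,t)=(1-t)x+ty$.
   Context: A bicombing on a metric space $(X,d)$ is a map $\sigma\colon X\times X\times[0,1]\to X$ such that each $\sigma_{xy}:=\sigma(x,y,\cdot)$ is a geodesic from $x$ to $y$ ($\sigma_{xy}(0)=x$, $\sigma_{xy}(1)=y$, $d(\sigma_{xy}(s),\sigma_{xy}(t))=|s-t|d(x,y)$). It is conical if $d(\sigma_{xy}(t),\sigma_{x'y'}(t))\le(1-t)d(x,x')+t\,d(y,y')$ for all $x,y,x',y'$, $t\in[0,1]$, and reversible if $\sigma_{xy}(t)=\sigma_{yx}(1-t)$ for all $x,y,t$. The Banach space is regarded as a metric space with $d(x,y)=\|x-y\|$. *)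

(* Defs.v *)
From HB Require Import structures.
From mathcomp Require Import all_boot all_order all_algebra.
From mathcomp Require Import all_classical all_reals all_analysis.
Set Implicit Arguments. Unset Strict Implicit. Unset Printing Implicit Defensive.
Import Order.TTheory GRing.Theory Num.Theory.
Local Open Scope ring_scope.

(* A Banach space V over the reals R, regarded as a metric space with
   d(x,y) = `|x - y|.  A bicombing is a map sigma : V -> V -> R -> V whose
   values are only relevant for t in [0,1]. *)

Definition in01 {R : realType} (t : R) := 0 <= t <= 1.

Definition is_bicombing {R : realType} {V : normedModType R}
  (sigma : V -> V -> R -> V) : Prop :=
  forall x y : V,
    sigma x y 0 = x /\ sigma x y 1 = y /\
    (forall s t : R, in01 s -> in01 t ->
       `|sigma x y s - sigma x y t| = `|s - t| * `|x - y|).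

Definition is_conical {R : realType} {V : normedModType R}
  (sigma : V -> V -> R -> V) : Prop :=
  forall (x y x' y' : V) (t : R), in01 t ->
    `|sigma x y t - sigma x' y' t| <= (1 - t) * `|x - x'| + t * `|y - y'|.

Definition is_reversible {R : realType} {V : normedModType R}
  (sigma : V -> V -> R -> V) : Prop :=
  forall (x y : V) (t : R), in01 t -> sigma x y t = sigma y x (1 - t).

Definition linear_bicombing {R : realType} {V : normedModType R}
  (x y : V) (t : R) : V := (1 - t) *: x + t *: y.

(* Main.v *)
Require Import Defs.
From HB Require Import structures.
From mathcomp Require Import all_boot all_order all_algebra.
From mathcomp Require Import all_classical all_reals all_analysis.
From mathcomp Require Import ring lra.
Import Order.TTheory GRing.Theory Num.Theory.
Local Open Scope ring_scope.

Section K.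
Variables (R : realType) (V : normedModType R) (e d : V).

Definition G (a b : R) := `|a *: e + b *: d|.

Lemma GE a b a' b' : a = a' -> b = b' -> G a b = G a' b'.
Proof. by move=> -> ->. Qed.

Lemma GT a b a' b' : G (a + a') (b + b') <= G a b + G a' b'.
Proof. by rewrite /G !scalerDl addrACA ler_normD. Qed.

Lemma GZ k a b : G (k * a) (k * b) = `|k| * G a b.
Proof. by rewrite /G -!scalerA -scalerDr normrZ. Qed.

Lemma G10 a : G a 0 = `|a| * `|e|.
Proof. by rewrite /G scale0r addr0 normrZ. Qed.

Lemma G01 b : G 0 b = `|b| * `|d|.
Proof. by rewrite /G scale0r add0r normrZ. Qed.

Lemma G_ge0 a b : 0 <= G a b.
Proof. exact: normr_ge0. Qed.

Lemma stepA (t : R) (Rr r : R) : 0 <= t -> t <= 1 -> 0 < Rr ->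
  (forall w : V, `|e - w| <= (1-t) * `|w - t*:d| + t * `|w + (1-t)*:d|) ->
  Rr * `|e| - 2 * `|r| * `|d| <=
  Rr * (t * (1 - t)) * (G (-Rr) (r - 1) + G (-Rr) (r + 1) - 2 * G (-Rr) r).
Proof.
move=> t0 t1 R0 H.
have h := H ((-Rr) *: e + r *: d).
have E1 : e - ((-Rr) *: e + r *: d) = (1 + Rr) *: e + (- r) *: d.
  by rewrite opprD -!scaleNr addrA -{1}[e]scale1r -scalerDl opprK.
have E2 : (-Rr) *: e + r *: d - t *: d = (-Rr) *: e + (r - t) *: d.
  by rewrite -addrA -scalerBl.
have E3 : (-Rr) *: e + r *: d + (1 - t) *: d = (-Rr) *: e + (r + (1 - t)) *: d.
  by rewrite -addrA -scalerDl.
have h' : G (1 + Rr) (- r) <= (1 - t) * G (-Rr) (r - t) + t * G (-Rr) (r + (1 - t)).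
  by move: h; rewrite E1 E2 E3.
have N1 : (1 + Rr) * G (-Rr) r <= Rr * G (1 + Rr) (- r) + `|r| * `|d|.
  have := GT (Rr * (1 + Rr)) (Rr * (- r)) 0 (- r).
  rewrite GZ (ger0_norm (ltW R0)) G01 normrN.
  have -> : G (Rr * (1 + Rr) + 0) (Rr * (- r) + - r) = G (- (1 + Rr) * (- Rr)) (- (1 + Rr) * r).
    by congr (G _ _); ring.
  rewrite GZ normrN (ger0_norm (_ : 0 <= 1 + Rr)); last by lra.
  lra.
have N2 : Rr * `|e| <= G (-Rr) r + `|r| * `|d|.
  have := GT (-Rr) r 0 (- r).
  rewrite G01 normrN.
  have -> : G (-Rr + 0) (r + - r) = G (-Rr) 0 by congr (G _ _); ring.
  by rewrite G10 normrN (ger0_norm (ltW R0)).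
have N3 : G (-Rr) (r - t) <= t * G (-Rr) (r - 1) + (1 - t) * G (-Rr) r.
  have := GT (t * (-Rr)) (t * (r - 1)) ((1 - t) * (-Rr)) ((1 - t) * r).
  rewrite !GZ (ger0_norm t0) (ger0_norm (_ : 0 <= 1 - t)); last by lra.
  have -> : G (t * (-Rr) + (1 - t) * (-Rr)) (t * (r - 1) + (1 - t) * r) = G (-Rr) (r - t).
    by congr (G _ _); ring.
  by [].
have N4 : G (-Rr) (r + (1 - t)) <= (1 - t) * G (-Rr) (r + 1) + t * G (-Rr) r.
  have := GT ((1 - t) * (-Rr)) ((1 - t) * (r + 1)) (t * (-Rr)) (t * r).
  rewrite !GZ (ger0_norm t0) (ger0_norm (_ : 0 <= 1 - t)); last by lra.
  have -> : G ((1 - t) * (-Rr) + t * (-Rr)) ((1 - t) * (r + 1) + t * r) = G (-Rr) (r + (1 - t)).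
    by congr (G _ _); ring.
  by [].
have g0p := G_ge0 (-Rr) (r - 1).
have g1p := G_ge0 (-Rr) r.
have g2p := G_ge0 (-Rr) (r + 1).
set g0 := G (-Rr) (r - 1) in N3 *.
set g1 := G (-Rr) r in N1 N2 N3 N4 *.
set g2 := G (-Rr) (r + 1) in N4 *.
set G1 := G (1 + Rr) (- r) in h' N1.
set ga := G (-Rr) (r - t) in h' N3.
set gb := G (-Rr) (r + (1 - t)) in h' N4.
have h2 : G1 <= t * (1 - t) * (g0 + g2) + ((1 - t) ^+ 2 + t ^+ 2) * g1 by nra.
have h3 : Rr * G1 <= Rr * (t * (1 - t) * (g0 + g2) + ((1 - t) ^+ 2 + t ^+ 2) * g1).
  by rewrite ler_wpM2l // ltW.
nra.
Qed.
Lemma Glip (Rr s : R) : `|G (-Rr) (s + 1) - G (-Rr) s| <= `|d|.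
Proof.
rewrite ler_norml; apply/andP; split.
  have := GT (-Rr) (s + 1) 0 (-1).
  have -> : G (-Rr + 0) (s + 1 + -1) = G (-Rr) s by congr (G _ _); ring.
  rewrite G01 normrN normr1; lra.
have := GT (-Rr) s 0 1.
have -> : G (-Rr + 0) (s + 1) = G (-Rr) (s + 1) by congr (G _ _); ring.
rewrite G01 normr1; lra.
Qed.

Lemma key (t : R) : 0 <= t -> t <= 1 ->
  (forall w : V, `|e - w| <= (1-t) * `|w - t*:d| + t * `|w + (1-t)*:d|) -> e = 0.
Proof.
move=> t0 t1 H.
have := normr_ge0 e; rewrite le0r => /orP [/eqP/normr0_eq0 -> //| ep].
exfalso.
set N := (Num.Def.trunc (4 * `|d| / `|e|)).+1.
have hN : 4 * `|d| / `|e| < N%:R by apply: truncnS_gt.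
have hN' : 4 * `|d| < N%:R * `|e|.
  by move: hN; rewrite ltr_pdivrMr.
have dp := normr_ge0 d.
set Rr := 4 * N%:R * `|d| / `|e| + 1.
have Rre : Rr * `|e| = 4 * N%:R * `|d| + `|e|.
  rewrite /Rr mulrDl mul1r -mulrA mulVf ?mulr1 //; by apply: lt0r_neq0.
have Np : 0 <= N%:R :> R by apply: ler0n.
have R0 : 0 < Rr.
  rewrite /Rr; have : 0 <= 4 * N%:R * `|d| / `|e|.
    by apply: divr_ge0 => //; apply: mulr_ge0 => //; apply: mulr_ge0.
  lra.
pose g s := G (-Rr) s.
pose sl (j : nat) := g (j.+1)%:R - g j%:R.
set c := t * (1 - t).
have c0 : 0 <= c by rewrite /c; nra.
have c1 : c <= 1 by rewrite /c; nra.
set k := Rr * `|e| - 2 * N%:R * `|d|.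
have step : forall j, (j < N)%N -> k <= Rr * c * (sl j.+1 - sl j).
  move=> j jN.
  have := stepA t Rr (j.+1)%:R t0 t1 R0 H.
  have -> : (j.+1)%:R - 1 = j%:R :> R by rewrite -natr1; ring.
  have -> : (j.+1)%:R + 1 = (j.+2)%:R :> R by rewrite natr1.
  rewrite (ger0_norm (ler0n _ _)).
  have : (j.+1)%:R <= N%:R :> R by rewrite ler_nat.
  move=> hj hA.
  have E : G (- Rr) j%:R + G (- Rr) j.+2%:R - 2 * G (- Rr) j.+1%:R = sl j.+1 - sl j.
    by rewrite /sl /g; ring.
  rewrite E -/c in hA.
  have : 2 * (j.+1)%:R * `|d| <= 2 * N%:R * `|d| by nra.
  rewrite /k; lra.
have ind : forall j, (j <= N)%N -> j%:R * k <= Rr * c * (sl j - sl 0).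
  elim=> [|j IH] jN; first by rewrite mul0r subrr mulr0.
  have h1 := IH (ltnW jN).
  have h2 := step j jN.
  rewrite -natr1.
  have -> : Rr * c * (sl j.+1 - sl 0) = Rr * c * (sl j - sl 0) + Rr * c * (sl j.+1 - sl j) by ring.
  lra.
have hf := ind N (leqnn N).
have L1 : `|sl N| <= `|d|.
  by rewrite /sl /g -natr1; apply: Glip.
have L0 : `|sl 0| <= `|d|.
  by rewrite /sl /g -natr1; apply: Glip.
have : sl N - sl 0 <= 2 * `|d|.
  move: L1 L0; rewrite !ler_norml => /andP [_ a] /andP [b _]; lra.
move=> hs.
have Rc0 : 0 <= Rr * c by apply: mulr_ge0 => //; apply: ltW.
have h3 : Rr * c * (sl N - sl 0) <= Rr * c * (2 * `|d|) by rewrite ler_wpM2l.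
have h4 : Rr * c * (2 * `|d|) <= Rr * (2 * `|d|).
  rewrite -mulrA; rewrite ler_wpM2l ?(ltW R0) //.
  have : 0 <= 2 * `|d| by lra.
  nra.
have hk : 2 * k >= Rr * `|e|.
  rewrite /k; lra.
have : N%:R * (Rr * `|e|) <= 4 * (Rr * `|d|) by nra.
have : N%:R * (Rr * `|e|) > 4 * (Rr * `|d|).
  have -> : N%:R * (Rr * `|e|) = Rr * (N%:R * `|e|) by ring.
  have -> : 4 * (Rr * `|d|) = Rr * (4 * `|d|) by ring.
  by rewrite ltr_pM2l.
lra.
Qed.
End K.

Definition F3 {R : realType} {V : normedModType R} (x y w : V) (a b c : R) :=
  a *: x + b *: y + c *: w.

Lemma F3D {R : realType} {V : normedModType R} (x y w : V) a b c a' b' c' :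
  F3 x y w a b c + F3 x y w a' b' c' = F3 x y w (a + a') (b + b') (c + c').
Proof. by rewrite /F3 !scalerDl addrACA (addrACA (a *: x)). Qed.

Lemma F3N {R : realType} {V : normedModType R} (x y w : V) a b c :
  - F3 x y w a b c = F3 x y w (- a) (- b) (- c).
Proof. by rewrite /F3 !opprD !scaleNr. Qed.

Lemma F3Z {R : realType} {V : normedModType R} (x y w : V) k a b c :
  k *: F3 x y w a b c = F3 x y w (k * a) (k * b) (k * c).
Proof. by rewrite /F3 !scalerDr !scalerA. Qed.

Lemma F3x {R : realType} {V : normedModType R} (x y w : V) : x = F3 x y w 1 0 0.
Proof. by rewrite /F3 scale1r !scale0r !addr0. Qed.
Lemma F3y {R : realType} {V : normedModType R} (x y w : V) : y = F3 x y w 0 1 0.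
Proof. by rewrite /F3 scale1r !scale0r add0r addr0. Qed.
Lemma F3w {R : realType} {V : normedModType R} (x y w : V) : w = F3 x y w 0 0 1.
Proof. by rewrite /F3 scale1r !scale0r !add0r. Qed.

Ltac lin3 x y w :=
  rewrite ?/linear_bicombing;
  rewrite (F3x x y w); let T := fresh "T" in set T := F3 x y w;
  rewrite (F3y x y w) -/T; try rewrite (F3w x y w) -/T; rewrite /T;
  rewrite ?(F3Z, F3N, F3D); congr (F3 _ _ _ _ _ _); ring.

Lemma id1 (R : realType) (V : normedModType R) (x y w : V) (t : R) :
  x - (linear_bicombing x y t + w) = - (w - t *: (x - y)).
Proof. lin3 x y w. Qed.

Lemma id2 (R : realType) (V : normedModType R) (x y w : V) (t : R) :
  y - (linear_bicombing x y t + w) = - (w + (1 - t) *: (x - y)).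
Proof. lin3 x y w. Qed.

Lemma id0 (R : realType) (V : normedModType R) (x y : V) (s t : R) :
  linear_bicombing x y s - linear_bicombing x y t = (t - s) *: (x - y).
Proof. lin3 x y (0 : V). Qed.

Theorem corollary1p3 (R : realType) (V : completeNormedModType R) :
  (is_bicombing (@linear_bicombing R V) /\
   is_conical (@linear_bicombing R V) /\
   is_reversible (@linear_bicombing R V)) /\
  (forall sigma : V -> V -> R -> V,
     is_bicombing sigma -> is_conical sigma -> is_reversible sigma ->
     forall (x y : V) (t : R), in01 t -> sigma x y t = linear_bicombing x y t).
Proof.
split.
- split; [|split].
  + move=> x y; split; [|split].
    * by rewrite /linear_bicombing subr0 scale1r scale0r addr0.
    * by rewrite /linear_bicombing subrr scale0r add0r scale1r.
    * move=> s t _ _; by rewrite id0 normrZ distrC.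
  + move=> x y x' y' t /andP [t0 t1].
    have -> : linear_bicombing x y t - linear_bicombing x' y' t =
              (1 - t) *: (x - x') + t *: (y - y').
      by rewrite /linear_bicombing !scalerBr opprD addrACA.
    apply: le_trans (ler_normD _ _) _.
    rewrite !normrZ (ger0_norm t0) ger0_norm //; lra.
  + move=> x y t _; rewrite /linear_bicombing [LHS]addrC.
    by congr (_ *: _ + _); ring.
- move=> sigma hb hc hr x y t Ht.
  have /andP [t0 t1] := Ht.
  apply/eqP; rewrite -subr_eq0; apply/eqP.
  apply: (@key R V _ (x - y) t t0 t1) => w.
  set L := linear_bicombing x y t.
  have sw : sigma (L + w) (L + w) t = L + w.
    have [h0 [_ hd]] := hb (L + w) (L + w).
    have H01 : in01 (0 : R) by rewrite /in01 lexx ler01.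
    have := hd t 0 Ht H01.
    rewrite subrr normr0 mulr0 h0 => /normr0_eq0 /eqP.
    by rewrite subr_eq0 => /eqP.
  have := hc x y (L + w) (L + w) t Ht.
  rewrite sw id1 id2 !normrN.
  by rewrite opprD addrA.
Qed.
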